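(* Let $\bar\rho>0$, $\bar\theta>0$, $R>0$, $c_v>0$, $\nu_0>0$, $k_0>0$ be constants, $b=\bar\theta/c_v$, and for $\xi\in\mathbb{R}$ let \[ A(\xi)=\begin{pmatrix}0&\bar\rho i\xi&0\\ \frac{R\bar\theta}{\bar\rho}i\xi&-\nu_0\xi^2&Ri\xi\\ 0&\frac{R\bar\theta}{c_v}i\xi&-k_0\xi^2\end{pmatrix}. \] Then for every $\xi\in\mathbb{R}$ all eigenvalues of $A(\xi)$ have non-positive real part. Moreover there exists $\xi_0=\xi_0(R,\bar\theta,\nu_0,k_0,b)>0$ such that for $|\xi|\ge\xi_0$ one can choose an eigenvalue $-\delta(\xi)$ of $A(\xi)$ satisfying \[ \lim_{|\xi|\to\infty}\delta(\xi)=\omega_0,\qquad \omega_0=\frac{R\bar\theta}{\nu_0}. \]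
   Context: $A(\xi)$ is the Fourier symbol of the adjoint of the one-dimensional compressible non-barotropic Navier–Stokes system linearized around $(\bar\rho,0,\bar\theta)$, with $\nu_0=(\lambda+2\mu)/\bar\rho$ and $k_0=\kappa/(\bar\rho c_v)$. *)

(* Defs.v *)
From HB Require Import structures.
From mathcomp Require Import all_boot all_order all_algebra.
From mathcomp Require Import reals complex.
Set Implicit Arguments. Unset Strict Implicit. Unset Printing Implicit Defensive.
Import Order.TTheory GRing.Theory Num.Theory.
Local Open Scope ring_scope.
Local Open Scope complex_scope.

(* Parameters: rho = \bar\rho, theta = \bar\theta, Rg = R (gas constant),
   cv = c_v, nu0, k0. *)
Definition Amat (R : realType) (rho theta Rg cv nu0 k0 xi : R)
  : 'M[R[i]]_3 :=
  let ixi : R[i] := (0 +i* xi) in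
  \matrix_(j < 3, k < 3)
    match nat_of_ord j, nat_of_ord k with
    | 0, 1 => rho%:C * ixi
    | 1, 0 => (Rg * theta / rho)%:C * ixi
    | 1, 1 => (- (nu0 * xi ^+ 2))%:C
    | 1, 2 => Rg%:C * ixi
    | 2, 1 => (Rg * theta / cv)%:C * ixi
    | 2, 2 => (- (k0 * xi ^+ 2))%:C
    | _, _ => 0
    end.

(* Main.v *)
Require Import Defs.
From HB Require Import structures.
From mathcomp Require Import all_boot all_order all_algebra.
From mathcomp Require Import reals complex.
From mathcomp Require Import ring lra.
From Stdlib Require Import ClassicalEpsilon.
Import Order.TTheory GRing.Theory Num.Theory.
Local Open Scope ring_scope.
Local Open Scope complex_scope.

Lemma mul3 (F : pzRingType) (v : 'rV[F]_3) (A : 'M[F]_3) j :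
  (v *m A) 0 j = v 0 0 * A 0 j + v 0 1 * A 1 j + v 0 2%:R * A 2%:R j.
Proof.
rewrite mxE !big_ord_recr big_ord0 /= add0r.
by congr (v 0 _ * A _ j + v 0 _ * A _ j + v 0 _ * A _ j); apply: val_inj.
Qed.

Lemma cpx_eq (R : realType) (x y x' y' : R) : (x +i* y = x' +i* y') <-> (x = x' /\ y = y').
Proof. by split; [case=> -> ->|case=> -> ->]. Qed.

Lemma eigen_real (R : realType) (rho theta Rg cv nu0 k0 xi : R) (v : 'rV[R[i]]_3)
  a0 b0 a1 b1 a2 b2 s t :
  v 0 0 = a0 +i* b0 -> v 0 1 = a1 +i* b1 -> v 0 2%:R = a2 +i* b2 ->
  let c := Rg * theta / rho in let d := Rg * theta / cv in
  (v *m Amat rho theta Rg cv nu0 k0 xi = (s +i* t) *: v) <->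
  (- c * xi * b1 = s * a0 - t * b0 /\
      c * xi * a1 = s * b0 + t * a0 /\
      - rho * xi * b0 - nu0 * xi^+2 * a1 - d * xi * b2 = s * a1 - t * b1 /\
      rho * xi * a0 - nu0 * xi^+2 * b1 + d * xi * a2 = s * b1 + t * a1 /\
      - Rg * xi * b1 - k0 * xi^+2 * a2 = s * a2 - t * b2 /\
      Rg * xi * a1 - k0 * xi^+2 * b2 = s * b2 + t * a2).
Proof.
move=> e0 e1 e2 c d.
have E j : (v *m Amat rho theta Rg cv nu0 k0 xi) 0 j = ((s +i* t) *: v) 0 j <->
   (v *m Amat rho theta Rg cv nu0 k0 xi) 0 j = (s +i* t) * v 0 j by rewrite [X in _ = X]mxE.
split.
  move=> H.
  have H0 := H; have H1 := H; have H2 := H.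
  move/rowP/(_ 0): H0; move/rowP/(_ 1): H1; move/rowP/(_ 2%:R): H2.
  rewrite !mul3 !mxE /= e0 e1 e2 /real_complex_def /=.
  simpc.
  move=> /cpx_eq [H2r H2i] /cpx_eq [H1r H1i] /cpx_eq [H0r H0i].
  rewrite /c /d; repeat split; lra.
case=> H0r [H0i [H1r [H1i [H2r H2i]]]].
rewrite /c /d in H0r H0i H1r H1i H2r H2i.
apply/rowP; case=> [[|[|[|j]]] Hj] //.
- rewrite (_ : Ordinal Hj = 0); last by apply: val_inj.
  rewrite mul3 !mxE /= e0 e1 e2 /real_complex_def /=; simpc; apply/cpx_eq; split; lra.
- rewrite (_ : Ordinal Hj = 1); last by apply: val_inj.
  rewrite mul3 !mxE /= e0 e1 e2 /real_complex_def /=; simpc; apply/cpx_eq; split; lra.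
- rewrite (_ : Ordinal Hj = 2%:R); last by apply: val_inj.
  rewrite mul3 !mxE /= e0 e1 e2 /real_complex_def /=; simpc; apply/cpx_eq; split; lra.
Qed.

Lemma part1_real (R : realType) (rho c Rg d nu k x s t a0 b0 a1 b1 a2 b2 : R) :
  0 < rho -> 0 < c -> 0 < Rg -> 0 < d -> 0 < nu -> 0 < k ->
  (- c * x * b1 = s * a0 - t * b0 /\
      c * x * a1 = s * b0 + t * a0 /\
      - rho * x * b0 - nu * x^+2 * a1 - d * x * b2 = s * a1 - t * b1 /\
      rho * x * a0 - nu * x^+2 * b1 + d * x * a2 = s * b1 + t * a1 /\
      - Rg * x * b1 - k * x^+2 * a2 = s * a2 - t * b2 /\
      Rg * x * a1 - k * x^+2 * b2 = s * b2 + t * a2) ->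
  0 < a0^+2 + b0^+2 + a1^+2 + b1^+2 + a2^+2 + b2^+2 ->
  s <= 0.
Proof.
move=> hr hc hR hd hn hk [H0r [H0i [H1r [H1i [H2r H2i]]]]] hN.
set n0 := a0^+2 + b0^+2; set n1 := a1^+2 + b1^+2; set n2 := a2^+2 + b2^+2.
have n0p : 0 <= n0 by rewrite addr_ge0 // sqr_ge0.
have n1p : 0 <= n1 by rewrite addr_ge0 // sqr_ge0.
have n2p : 0 <= n2 by rewrite addr_ge0 // sqr_ge0.
set w0 := rho * Rg; set w1 := c * Rg; set w2 := c * d.
have w0p : 0 < w0 by rewrite mulr_gt0.
have w1p : 0 < w1 by rewrite mulr_gt0.
have w2p : 0 < w2 by rewrite mulr_gt0.
set S := w0 * n0 + w1 * n1 + w2 * n2.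
have key : s * S = - (w1 * nu * x^+2 * n1 + w2 * k * x^+2 * n2).
  have -> : s * S = w0 * (a0 * (s * a0 - t * b0) + b0 * (s * b0 + t * a0))
     + w1 * (a1 * (s * a1 - t * b1) + b1 * (s * b1 + t * a1))
     + w2 * (a2 * (s * a2 - t * b2) + b2 * (s * b2 + t * a2)).
    rewrite /S /n0 /n1 /n2; ring.
  rewrite -H0r -H0i -H1r -H1i -H2r -H2i /w0 /w1 /w2 /n1 /n2; ring.
have Sp : 0 < S.
  rewrite ltNge; apply/negP => hS.
  have h0 : w0 * n0 <= 0.
    have := mulr_ge0 (ltW w1p) n1p; have := mulr_ge0 (ltW w2p) n2p; rewrite /S in hS; lra.
  have h1 : w1 * n1 <= 0.
    have := mulr_ge0 (ltW w0p) n0p; have := mulr_ge0 (ltW w2p) n2p; rewrite /S in hS; lra.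
  have h2 : w2 * n2 <= 0.
    have := mulr_ge0 (ltW w1p) n1p; have := mulr_ge0 (ltW w0p) n0p; rewrite /S in hS; lra.
  rewrite pmulr_rle0 // in h0; rewrite pmulr_rle0 // in h1; rewrite pmulr_rle0 // in h2.
  move: hN h0 h1 h2; rewrite /n0 /n1 /n2; lra.
have x2 : 0 <= x^+2 by rewrite sqr_ge0.
have q1 : 0 <= w1 * nu * x^+2 * n1 by apply/mulr_ge0/n1p/mulr_ge0/x2/mulr_ge0; apply: ltW.
have q2 : 0 <= w2 * k * x^+2 * n2 by apply/mulr_ge0/n2p/mulr_ge0/x2/mulr_ge0; apply: ltW.
rewrite leNgt; apply/negP => hs.
have := mulr_gt0 hs Sp; rewrite key; lra.
Qed.
Definition Fc (R : realType) (nu k om D X d : R) :=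
  nu*om*X*(k*X - d) - d*(nu*X - d)*(k*X - d) - D*X*d.
Arguments Fc {R}.

Lemma root_exists (R : realType) (nu k om D X : R) :
  0 < nu -> 0 < k -> 0 < om -> 0 < D -> 4 * om * (nu + k) < nu * k * X ->
  exists2 d, 0 <= d <= 2 * om & Fc nu k om D X d = 0.
Proof.
move=> hn hk ho hD hX.
have Xp : 0 < X.
  have : 0 < 4 * om * (nu + k) by rewrite !mulr_gt0 // addr_gt0.
  move=> h; have : 0 < nu * k * X by lra.
  by rewrite pmulr_rgt0 // mulr_gt0.
pose p : {poly R} := - ((nu*om*X)%:P * ((k*X)%:P - 'X) - 'X * ((nu*X)%:P - 'X) * ((k*X)%:P - 'X)
   - (D*X)%:P * 'X).
have hp d : p.[d] = - Fc nu k om D X d by rewrite /p /Fc !hornerE.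
have H1 : 0 <= 2 * om by rewrite mulr_ge0 // ltW.
have H2 : p.[0] <= 0 <= p.[2 * om].
  rewrite !hp; apply/andP; split.
  + rewrite /Fc oppr_le0.
    have -> : nu * om * X * (k * X - 0) - 0 * (nu * X - 0) * (k * X - 0) - D * X * 0
      = nu * om * X * (k * X) by ring.
    by rewrite !mulr_ge0 // ltW.
  + rewrite oppr_ge0.
    have -> : Fc nu k om D X (2 * om) = X*(4*om^+2*(nu+k) - nu*k*om*X) - 2*nu*om^+2*X
         - 8 * om^+3 - 2*D*X*om by rewrite /Fc; ring.
    have h1 : X*(4*om^+2*(nu+k) - nu*k*om*X) < 0.
      rewrite pmulr_rlt0 // subr_lt0.
      have -> : 4*om^+2*(nu+k) = om * (4 * om * (nu+k)) by ring.
      have -> : nu*k*om*X = om * (nu * k * X) by ring.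
      by rewrite ltr_pM2l.
    have h2 : 0 <= 2*nu*om^+2*X by rewrite !mulr_ge0 // ?sqr_ge0 // ltW.
    have h3 : 0 <= 8 * om^+3 by rewrite mulr_ge0 // exprn_ge0 // ltW.
    have h4 : 0 <= 2*D*X*om by rewrite !mulr_ge0 // ltW.
    lra.
have [d hd hr] := @poly_ivt R p 0 (2 * om) H1 H2.
exists d => //; move: hr => /rootP; rewrite hp => /eqP; rewrite oppr_eq0 => /eqP //.
Qed.

Lemma root_bound (R : realType) (nu k om D X d : R) :
  0 < nu -> 0 < k -> 0 < om -> 0 < D -> 1 <= X -> 0 <= d <= 2 * om ->
  Fc nu k om D X d = 0 ->
  let K := (nu*om + D)*(2*om) + (nu+k)*(4*om^+2) + 8*om^+3 in
  nu*k*X*(om - d) <= K /\ nu*k*X*(d - om) <= K.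
Proof.
move=> hn hk ho hD hX /andP[d0 d2] hF K.
set P := (nu*om + D)*d - (nu+k)*d^+2.
have id : nu*k*X^+2*(om - d) = X*P + d^+3.
  apply/eqP; rewrite -subr_eq0; apply/eqP; rewrite -hF /Fc /P; ring.
have hP1 : P <= (nu*om + D)*(2*om).
  have : (nu*om+D)*d <= (nu*om+D)*(2*om) by rewrite ler_wpM2l // addr_ge0 // ?mulr_ge0 // ltW.
  have : 0 <= (nu+k)*d^+2 by rewrite mulr_ge0 ?sqr_ge0 // addr_ge0 // ltW.
  rewrite /P; lra.
have hP2 : - P <= (nu+k)*(4*om^+2).
  have : d^+2 <= (2*om)^+2 by rewrite ler_pXn2r // ?nnegrE // mulr_ge0 // ltW.
  rewrite (_ : (2*om)^+2 = 4*om^+2); last by ring.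
  move=> h; have : (nu+k)*d^+2 <= (nu+k)*(4*om^+2) by rewrite ler_wpM2l // addr_ge0 // ltW.
  have : 0 <= (nu*om+D)*d by rewrite mulr_ge0 // addr_ge0 // ?mulr_ge0 // ltW.
  rewrite /P; lra.
have hd3 : 0 <= d^+3 by rewrite exprn_ge0.
have hd3' : d^+3 <= 8*om^+3.
  have : d^+3 <= (2*om)^+3 by rewrite ler_pXn2r // ?nnegrE // mulr_ge0 // ltW.
  by rewrite (_ : (2*om)^+3 = 8*om^+3) //; ring.
have o3 : 0 <= 8*om^+3 by rewrite mulr_ge0 // exprn_ge0 // ltW.
have X0 : 0 < X by lra.
have hK1 : 0 <= (nu*om + D)*(2*om) by rewrite mulr_ge0 // ?addr_ge0 // ?mulr_ge0 // ltW.
have hK2 : 0 <= (nu+k)*(4*om^+2) by rewrite mulr_ge0 // ?addr_ge0 // ?mulr_ge0 // ?sqr_ge0 // ltW.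
have e3 : 8*om^+3 <= X * (8*om^+3) by rewrite ler_peMl.
have XP1 : X * P <= X * ((nu*om + D)*(2*om)) by rewrite ler_wpM2l // ltW.
have XP2 : X * (-P) <= X * ((nu+k)*(4*om^+2)) by rewrite ler_wpM2l // ltW.
have XK1 : X * ((nu*om + D)*(2*om)) + X * (8*om^+3) <= X * K.
  rewrite -mulrDr; apply: ler_wpM2l; [exact: ltW|]; rewrite /K; lra.
have XK2 : X * ((nu+k)*(4*om^+2)) <= X * K.
  apply: ler_wpM2l; [exact: ltW|]; rewrite /K; lra.
split.
- rewrite -(ler_pM2l X0).
  have -> : X * (nu*k*X*(om - d)) = nu*k*X^+2*(om - d) by ring.
  rewrite id; lra.
- rewrite -(ler_pM2l X0).
  have -> : X * (nu*k*X*(d - om)) = - (nu*k*X^+2*(om - d)) by ring.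
  rewrite id; rewrite mulrN in XP2; lra.
Qed.

Lemma ReC (R : realType) (s t : R) : Re (s +i* t) = s%:C.
Proof.
have rs : (s%:C : R[i]) \is Num.real by apply/complex_realP; exists s.
have rt : (t%:C : R[i]) \is Num.real by apply/complex_realP; exists t.
rewrite [s +i* t]complexE /=. exact: (Re_rect rs rt).
Qed.

Lemma sq6 (R : realType) (a0 b0 a1 b1 a2 b2 : R) :
  a0^+2 + b0^+2 + a1^+2 + b1^+2 + a2^+2 + b2^+2 <= 0 ->
  [/\ a0 = 0, b0 = 0, a1 = 0, b1 = 0 & a2 = 0 /\ b2 = 0].
Proof.
move=> h.
have q0 := sqr_ge0 a0; have q1 := sqr_ge0 b0; have q2 := sqr_ge0 a1.
have q3 := sqr_ge0 b1; have q4 := sqr_ge0 a2; have q5 := sqr_ge0 b2.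
have z (a : R) : a^+2 = 0 -> a = 0 by move/eqP; rewrite sqrf_eq0 => /eqP.
split; [apply: z; lra|apply: z; lra|apply: z; lra|apply: z; lra|split; apply: z; lra].
Qed.

Lemma Xbig (R : realType) (x B : R) : 0 <= B -> B + 1 <= `|x| -> B < x^+2 /\ `|x| <= x^+2.
Proof.
move=> hB hx.
have h1 : 1 <= `|x| by lra.
rewrite -real_normK ?num_real //.
have : `|x| * 1 <= `|x| * `|x| by rewrite ler_wpM2l.
rewrite mulr1 -expr2 => h; split; lra.
Qed.

Lemma normC_real (R : realType) (a : R) : `|a%:C| = `|a|%:C.
Proof. by rewrite normc_def /= expr0n /= addr0 sqrtr_sqr. Qed.

Theorem lemma2p5 (R : realType) (rho theta Rg cv nu0 k0 : R) :
  0 < rho -> 0 < theta -> 0 < Rg -> 0 < cv -> 0 < nu0 -> 0 < k0 ->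
  (forall (xi : R) (lam : R[i]),
      eigenvalue (Amat rho theta Rg cv nu0 k0 xi) lam -> Re lam <= 0) /\
  (exists xi0 : R, 0 < xi0 /\
     exists delta : R -> R[i],
       (forall xi : R, xi0 <= `|xi| ->
          eigenvalue (Amat rho theta Rg cv nu0 k0 xi) (- delta xi)) /\
       (forall eps : R, 0 < eps -> exists M : R, forall xi : R,
          M <= `|xi| -> `|delta xi - (Rg * theta / nu0)%:C| < eps%:C)).
Proof.
move=> hr ht hR hc hn hk.
have cp : 0 < Rg * theta / rho by rewrite divr_gt0 // mulr_gt0.
have dp : 0 < Rg * theta / cv by rewrite divr_gt0 // mulr_gt0.
split.
  move=> xi lam /eigenvalueP [v Hv vnz].
  case E0: (v 0 0) => [a0 b0]; case E1: (v 0 1) => [a1 b1]; case E2: (v 0 2%:R) => [a2 b2].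
  move: Hv; case: lam => s t Hv /=.
  have H := proj1 (@eigen_real R rho theta Rg cv nu0 k0 xi v a0 b0 a1 b1 a2 b2 s t E0 E1 E2) Hv.
  rewrite ReC (_ : (0 : R[i]) = 0%:C) // lecR.
  apply: (@part1_real R rho _ Rg _ nu0 k0 xi s t a0 b0 a1 b1 a2 b2 hr cp hR dp hn hk H).
  rewrite ltNge; apply/negP => /sq6 [z0 z1 z2 z3 [z4 z5]].
  move/negP: vnz; apply; apply/eqP/rowP => j; rewrite mxE.
  case: j => [[|[|[|j]]] Hj] //.
  - by rewrite (_ : Ordinal Hj = 0) ?E0 ?z0 ?z1 //; apply: val_inj.
  - by rewrite (_ : Ordinal Hj = 1) ?E1 ?z2 ?z3 //; apply: val_inj.
  - by rewrite (_ : Ordinal Hj = 2%:R) ?E2 ?z4 ?z5 //; apply: val_inj.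
set om := Rg * theta / nu0; set D := Rg * (Rg * theta / cv).
have omp : 0 < om by rewrite divr_gt0 // mulr_gt0.
have Dp : 0 < D by rewrite mulr_gt0.
have nkp : 0 < nu0 * k0 by rewrite mulr_gt0.
set X0 := 4 * om * (nu0 + k0) / (nu0 * k0).
have X0p : 0 <= X0.
  have f4 : (0:R) < 4 by lra.
  have nk : 0 < nu0 + k0 by rewrite addr_gt0.
  apply/ltW/divr_gt0 => //; apply/mulr_gt0 => //; exact/mulr_gt0.
have X0e : nu0 * k0 * X0 = 4 * om * (nu0 + k0).
  rewrite /X0 mulrC; apply: divfK; exact: lt0r_neq0.
pose P (xi d : R) := 0 <= d <= 2 * om /\ Fc nu0 k0 om D (xi^+2) d = 0.
pose dl (xi : R) := epsilon (inhabits 0) (P xi).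
have spec xi : X0 + 1 <= `|xi| -> P xi (dl xi).
  move=> hxi; apply: epsilon_spec.
  have [hX _] := @Xbig R xi X0 X0p hxi.
  have : 4 * om * (nu0 + k0) < nu0 * k0 * xi^+2 by rewrite -X0e ltr_pM2l.
  move/(@root_exists R nu0 k0 om D (xi^+2) hn hk omp Dp) => [d hd hF]; exists d; split.
  exact: hd. exact: hF.
exists (X0 + 1); split; first lra.
exists (fun xi => (dl xi)%:C); split.
  move=> xi hxi.
  have [/andP[d0 d2] hF] := spec xi hxi.
  set dd := dl xi in hF d0 d2 *.
  have [hX hX2] := @Xbig R xi X0 X0p hxi.
  have Xp : 0 < xi^+2 by lra.
  have xinz : xi != 0 by apply/eqP => h; rewrite h normr0 in hxi; lra.
  have ddnz : dd != 0.
    apply/eqP => h; move: hF; rewrite h /Fc.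
    have -> : nu0 * om * xi ^+ 2 * (k0 * xi ^+ 2 - 0) - 0 * (nu0 * xi ^+ 2 - 0) * (k0 * xi ^+ 2 - 0) -
      D * xi ^+ 2 * 0 = (nu0 * om * k0) * (xi^+2 * xi^+2) by ring.
    move=> h0.
    have : 0 < (nu0 * om * k0) * (xi^+2 * xi^+2).
      by apply: mulr_gt0; [apply: mulr_gt0 => //; apply: mulr_gt0 | apply: mulr_gt0].
    lra.
  have -> : - dd%:C = (-dd) +i* 0 by rewrite /real_complex_def; simpc.
  apply/eigenvalueP.
  set c := Rg * theta / rho.
  set b0 := c * xi * (k0 * xi^+2 - dd); set a1 := - dd * (k0 * xi^+2 - dd); set b2 := - Rg * xi * dd.
  exists (\row_(j < 3) [:: 0 +i* b0; a1 +i* 0; 0 +i* b2]`_j).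
    have E0 : (\row_(j < 3) [:: 0 +i* b0; a1 +i* 0; 0 +i* b2]`_j) 0 0 = 0 +i* b0 by rewrite mxE.
    have E1 : (\row_(j < 3) [:: 0 +i* b0; a1 +i* 0; 0 +i* b2]`_j) 0 1 = a1 +i* 0 by rewrite mxE.
    have E2 : (\row_(j < 3) [:: 0 +i* b0; a1 +i* 0; 0 +i* b2]`_j) 0 2%:R = 0 +i* b2 by rewrite mxE.
    apply: (proj2 (@eigen_real R rho theta Rg cv nu0 k0 xi _ 0 b0 a1 0 0 b2 (-dd) 0 E0 E1 E2)).
    rewrite /b0 /a1 /b2 /c.
    have rn : rho != 0 by exact: lt0r_neq0.
    have nn : nu0 != 0 by exact: lt0r_neq0.
    have cn : cv != 0 by exact: lt0r_neq0.
    split; first by ring.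
    split; first by ring.
    split.
      apply/eqP; rewrite -subr_eq0; apply/eqP.
      transitivity (- Fc nu0 k0 om D (xi^+2) dd); last by rewrite hF oppr0.
      rewrite /Fc /om /D /c; field; by rewrite ?cn ?nn ?rn.
    split; first by ring.
    split; first by ring.
    ring.
  apply/negP => /eqP /rowP /(_ 2%:R); rewrite !mxE /= => /(congr1 (@complex.Im R)) /= /eqP.
  rewrite /b2 !mulf_eq0 oppr_eq0 (negbTE xinz) (negbTE ddnz) (negbTE (lt0r_neq0 hR)) //.
move=> eps he.
set K := (nu0*om + D)*(2*om) + (nu0+k0)*(4*om^+2) + 8*om^+3.
have Kp : 0 <= K.
  have h1 : 0 <= (nu0*om + D)*(2*om) by apply: mulr_ge0; [apply: addr_ge0; [apply: mulr_ge0|]|apply: mulr_ge0]; lra.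
  have h2 : 0 <= (nu0+k0)*(4*om^+2) by apply: mulr_ge0; [|apply: mulr_ge0; [|apply: sqr_ge0]]; lra.
  have h3 : 0 <= 8*om^+3 by apply: mulr_ge0; [|apply: exprn_ge0]; lra.
  rewrite /K; lra.
have zp : 0 < nu0 * k0 * eps by apply: mulr_gt0.
have Kz : 0 <= K / (nu0 * k0 * eps) by apply: divr_ge0 => //; exact: ltW.
exists (X0 + 1 + K / (nu0 * k0 * eps)) => xi hM.
have hxi : X0 + 1 <= `|xi| by lra.
have [/andP[d0 d2] hF] := spec xi hxi.
set dd := dl xi in hF d0 d2 *.
have [hX hX2] := @Xbig R xi X0 X0p hxi.
have X1 : 1 <= xi^+2 by lra.
have [b1 b2] := @root_bound R nu0 k0 om D (xi^+2) dd hn hk omp Dp X1 (introT andP (conj d0 d2)) hF.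
have hKX : K < nu0 * k0 * xi^+2 * eps.
  have h : K / (nu0 * k0 * eps) < xi^+2 by lra.
  have e : K = K / (nu0 * k0 * eps) * (nu0 * k0 * eps) by rewrite divfK // lt0r_neq0.
  rewrite e (_ : nu0 * k0 * xi^+2 * eps = xi^+2 * (nu0 * k0 * eps)); last by ring.
  by rewrite ltr_pM2r.
have nkX : 0 < nu0 * k0 * xi^+2 by apply: mulr_gt0 => //; lra.
rewrite -raddfB normC_real ltcR ltr_norml; apply/andP; split.
  rewrite ltNge; apply/negP => h.
  have : nu0 * k0 * xi^+2 * eps <= nu0 * k0 * xi^+2 * (om - dd) by apply: ler_wpM2l; [exact: ltW|lra].
  rewrite -/K in b1 b2; lra.
rewrite ltNge; apply/negP => h.
have : nu0 * k0 * xi^+2 * eps <= nu0 * k0 * xi^+2 * (dd - om) by apply: ler_wpM2l; [exact: ltW|lra].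
rewrite -/K in b1 b2; lra.
Qed.
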